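(* For every algebraic type $\tau$, $\mathsf{FiCA}_\tau=\mathbb{I}\,\mathsf{BLK}_\tau$: a clone $\tau$-algebra is finite dimensional if and only if it is isomorphic to a block $\tau$-algebra.
   Context: Let $\omega=\{1,2,\dots\}$. A clone $\tau$-algebra is an algebra $\mathbf C=(C,\sigma^{\mathbf C}\ (\sigma\in\tau),q_n^{\mathbf C}\ (n\ge0),\mathsf e_i^{\mathbf C}\ (i\ge1))$ with $\mathsf e_i$ nullary and $q_n$ of arity $n+1$ satisfying: (C1) $q_n(\mathsf e_i,x_1,\dots,x_n)=x_i$ ($1\le i\le n$); (C2) $q_n(\mathsf e_j,x_1,\dots,x_n)=\mathsf e_j$ ($j>n$); (C3) $q_n(x,\mathsf e_1,\dots,\mathsf e_n)=x$; (C4) $q_k(x,y_1,\dots,y_k)=q_n(x,y_1,\dots,y_k,\mathsf e_{k+1},\dots,\mathsf e_n)$ ($n>k$); (C5) $q_n(q_n(x,\mathbf y),\mathbf z)=q_n(x,q_n(y_1,\mathbf z),\dots,q_n(y_n,\mathbf z))$; (C6) $q_n(\sigma(x_1,\dots,x_k),\mathbf y)=\sigma(q_n(x_1,\mathbf y),\dots,q_n(x_k,\mathbf y))$ for $\sigma\in\tau$ of arity $k$. An element $a$ is independent of $\mathsf e_n$ if $q_n(a,\mathsf e_1,\dots,\mathsf e_{n-1},\mathsf e_{n+1})=a$; $a$ has finite dimension if it is dependent on only finitely many $\mathsf e_n$. $\mathsf{FiCA}_\tau$ is the class of clone $\tau$-algebras all of whose elements have finite dimension. For a $\tau$-algebra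 $\mathbf A$, the full functional clone $\tau$-algebra with value domain $\mathbf A$ has universe all functions $A^\omega\to A$ and operations $\mathsf e_i(s)=s_i$, $q_n(\varphi,\psi_1,\dots,\psi_n)(s)=\varphi(s[\psi_1(s),\dots,\psi_n(s)])$ (where $s[b_1,\dots,b_n]$ replaces the first $n$ entries of $s$ by the $b_i$), $\sigma(\psi_1,\dots,\psi_n)(s)=\sigma^{\mathbf A}(\psi_1(s),\dots,\psi_n(s))$. The top extension of a finitary $f:A^n\to A$ ($n\ge0$) is $f^\top(s)=f(s_1,\dots,s_n)$. $\mathsf{BLK}_\tau$ is the class of subalgebras of full functional clone $\tau$-algebras (over any $\tau$-algebra $\mathbf A$) whose elements are all top extensions of finitary operations on $A$. $\mathbb I$ denotes closure under isomorphic copies. *)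

(* Defs.v *)
From mathcomp Require Import all_boot.
Set Implicit Arguments. Unset Strict Implicit. Unset Printing Implicit Defensive.

(* Conventions: an algebraic type tau is a type of symbols [sig] with an
   arity map [ar].  Indices are 0-based: [e i] stands for the paper's
   e_{i+1}, and a sequence s : nat -> A stands for (s_1, s_2, ...) with
   s i = s_{i+1}. *)

Section CloneAlgebras.
Variables (sig : Type) (ar : sig -> nat).

Record cloneOps (C : Type) := CloneOps {
  op : forall s : sig, ('I_(ar s) -> C) -> C;
  qq : forall n : nat, C -> ('I_n -> C) -> C;
  ee : nat -> C
}.
Arguments op {C} c s _.
Arguments qq {C} c n _ _.
Arguments ee {C} c i.

Definition pad_e (C : Type) (e : nat -> C) (k n : nat) (y : 'I_k -> C)
  : 'I_n -> C :=
  fun i => match (insub (val i) : option 'I_k) with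
           | Some j => y j
           | None => e (val i)
           end.

Definition is_clone_alg (C : Type) (O : cloneOps C) : Prop :=
  (forall n (i : 'I_n) (y : 'I_n -> C), qq O n (ee O i) y = y i) /\
  (forall n j (y : 'I_n -> C), n <= j -> qq O n (ee O j) y = ee O j) /\
  (forall n x, qq O n x (fun i : 'I_n => ee O i) = x) /\
  (forall k n x (y : 'I_k -> C), k < n ->
                 qq O k x y = qq O n x (@pad_e C (ee O) k n y)) /\
  (forall n x (y z : 'I_n -> C),
                 qq O n (qq O n x y) z = qq O n x (fun i => qq O n (y i) z)) /\
  (forall s (xs : 'I_(ar s) -> C) n (y : 'I_n -> C),
                 qq O n (op O s xs) y = op O s (fun j => qq O n (xs j) y)).

(* a is independent of e_{m+1}:
   q_{m+1}(a, e_1, ..., e_m, e_{m+2}) = a *)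
Definition independent (C : Type) (O : cloneOps C) (a : C) (m : nat) : Prop :=
  qq O (m.+1) a (fun i : 'I_m.+1 => if val i < m then ee O i else ee O (m.+1))
  = a.

Definition finite_dimensional_elt (C : Type) (O : cloneOps C) (a : C) : Prop :=
  exists N, forall m, N <= m -> independent O a m.

Definition FiCA (C : Type) (O : cloneOps C) : Prop :=
  is_clone_alg O /\ forall a : C, finite_dimensional_elt O a.

Definition upd (A : Type) (n : nat) (s : nat -> A) (b : 'I_n -> A) : nat -> A :=
  fun i => match (insub i : option 'I_n) with
           | Some j => b j
           | None => s i
           end.

Definition full_fun_ops (A : Type) (opA : forall s : sig, ('I_(ar s) -> A) -> A)
  : cloneOps ((nat -> A) -> A) :=
  @CloneOps ((nat -> A) -> A)
    (fun s psi => fun t => opA s (fun j => psi j t))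
    (fun n phi psi => fun t => phi (upd t (fun i => psi i t)))
    (fun i => fun t => t i).

Definition top_ext (A : Type) (n : nat) (f : ('I_n -> A) -> A) : (nat -> A) -> A :=
  fun t => f (fun i : 'I_n => t (val i)).

Definition is_subalg (A : Type) (opA : forall s : sig, ('I_(ar s) -> A) -> A)
  (S : ((nat -> A) -> A) -> Prop) : Prop :=
  let F := full_fun_ops opA in
  (forall s (xs : 'I_(ar s) -> (nat -> A) -> A),
      (forall j, S (xs j)) -> S (op F s xs)) /\
  (forall n phi (psi : 'I_n -> (nat -> A) -> A),
      S phi -> (forall i, S (psi i)) -> S (qq F n phi psi)) /\
  (forall i, S (ee F i)).

Definition is_block (A : Type) (opA : forall s : sig, ('I_(ar s) -> A) -> A)
  (S : ((nat -> A) -> A) -> Prop) : Prop :=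
  is_subalg opA S /\
  forall phi, S phi -> exists n (f : ('I_n -> A) -> A), phi = top_ext f.

Definition iso_onto (C : Type) (O : cloneOps C) (A : Type)
  (opA : forall s : sig, ('I_(ar s) -> A) -> A)
  (S : ((nat -> A) -> A) -> Prop) (h : C -> (nat -> A) -> A) : Prop :=
  let F := full_fun_ops opA in
  injective h /\
  (forall phi, S phi <-> exists c, h c = phi) /\
  (forall s (xs : 'I_(ar s) -> C), h (op O s xs) = op F s (fun j => h (xs j))) /\
  (forall n x (y : 'I_n -> C), h (qq O n x y) = qq F n (h x) (fun i => h (y i))) /\
  (forall i, h (ee O i) = ee F i).

Definition iso_to_block (C : Type) (O : cloneOps C) : Prop :=
  exists (A : Type) (opA : forall s : sig, ('I_(ar s) -> A) -> A)
         (S : ((nat -> A) -> A) -> Prop) (h : C -> (nat -> A) -> A),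
    is_block opA S /\ iso_onto O opA S h.

End CloneAlgebras.

(* Main.v *)
From Stdlib Require Import FunctionalExtensionality ClassicalEpsilon.
Require Import Defs.
From mathcomp Require Import all_boot.
Set Implicit Arguments. Unset Strict Implicit. Unset Printing Implicit Defensive.

Notation qqn O n := (@qq _ _ _ O n).
Notation opn O s := (@op _ _ _ O s).

Definition restr (C : Type) (t : nat -> C) m : 'I_m -> C := fun i => t (val i).
Arguments restr {C} t m.

Lemma indep_gen sig (ar : sig -> nat) C (O : cloneOps ar C) a m :
  is_clone_alg O -> independent O a m ->
  forall u : 'I_m.+1 -> C, qqn O m.+1 a u =
    qqn O m.+1 a (fun i => if val i < m then u i else ee O (m.+1)).
Proof.
move=> [C1 [C2 [C3 [C4 [C5 C6]]]]] Hi u.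
rewrite -[in LHS]Hi C5; congr (qqn O m.+1 a); apply: functional_extensionality => i.
case: ifP => _; [exact: C1 | exact: C2].
Qed.

Lemma step sig (ar : sig -> nat) C (O : cloneOps ar C) a m (t : nat -> C) :
  is_clone_alg O -> independent O a m ->
  qqn O m a (restr t m) = qqn O m.+1 a (restr t m.+1).
Proof.
move=> H Hi; have [C1 [C2 [C3 [C4 [C5 C6]]]]] := H.
rewrite (C4 m m.+1) // (indep_gen H Hi) (indep_gen H Hi (restr t m.+1)).
congr (qqn O m.+1 a); apply: functional_extensionality => i.
case: ifP => // Him; rewrite /pad_e.
case: insubP => [j _ Ej | /negP //]; by rewrite /restr Ej.
Qed.

Lemma stable sig (ar : sig -> nat) C (O : cloneOps ar C) a N :
  is_clone_alg O -> (forall m, N <= m -> independent O a m) ->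
  forall t m, N <= m -> qqn O m a (restr t m) = qqn O N a (restr t N).
Proof.
move=> H Hi t; elim=> [|m IH]; first by rewrite leqn0 => /eqP ->.
rewrite leq_eqVlt => /orP [/eqP -> // | Hm].
rewrite ltnS in Hm.
rewrite -(step t H (Hi m Hm)); exact: IH.
Qed.

Lemma fica_block sig (ar : sig -> nat) C (O : cloneOps ar C) :
  FiCA O -> iso_to_block O.
Proof.
case=> H Hfd; have [C1 [C2 [C3 [C4 [C5 C6]]]]] := H.
pose Nf c := proj1_sig (constructive_indefinite_description _ (Hfd c)).
have HN c m : Nf c <= m -> independent O c m :=
  proj2_sig (constructive_indefinite_description _ (Hfd c)) m.
pose h c := fun t => qqn O (Nf c) c (restr t (Nf c)).
have hv c t m : Nf c <= m -> h c t = qqn O m c (restr t m).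
  by move=> Hm; rewrite /h (stable H (HN c) t Hm).
have hinj : injective h.
  move=> a b Hab; pose M := maxn (Nf a) (Nf b).
  have := congr1 (fun f => f (fun i => ee O i)) Hab => /=.
  rewrite (hv a _ M) ?leq_maxl // (hv b _ M) ?leq_maxr //.
  by rewrite /restr /= !C3.
have hop : forall s xs, h (opn O s xs) = opn (full_fun_ops (op O)) s (fun j => h (xs j)).
  move=> s xs; apply: functional_extensionality => t /=.
  pose M := maxn (Nf (opn O s xs)) (\max_(j < ar s) Nf (xs j)).
  rewrite (hv _ _ M) ?leq_maxl // C6; congr (opn O s); apply: functional_extensionality => j.
  rewrite (hv _ _ M) //; apply: leq_trans (leq_maxr _ _); exact: leq_bigmax.
have hqq : forall n x y, h (qqn O n x y) =
    qqn (full_fun_ops (op O)) n (h x) (fun i => h (y i)).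
  move=> n x y; apply: functional_extensionality => t /=.
  pose M := maxn n.+1 (maxn (Nf (qqn O n x y)) (maxn (Nf x) (\max_(i < n) Nf (y i)))).
  have HnM : n < M := leq_maxl _ _.
  have H1 : Nf (qqn O n x y) <= M by rewrite !leq_max leqnn !orbT.
  have Hx : Nf x <= M by rewrite !leq_max leqnn !orbT.
  have Hy i : Nf (y i) <= M by rewrite !leq_max leq_bigmax !orbT.
  rewrite (hv _ _ M H1) (C4 n M) // C5 (hv x _ M Hx).
  congr (qqn O M x); apply: functional_extensionality => i.
  rewrite /pad_e /restr /upd.
  case: (insub (val i)) => [j|]; first by rewrite (hv _ _ M).
  exact: C1.
have hee : forall i, h (ee O i) = ee (full_fun_ops (op O)) i.
  move=> i; apply: functional_extensionality => t /=.
  have Hi : i < maxn (Nf (ee O i)) i.+1 by rewrite leq_max ltnSn orbT.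
  rewrite (hv _ _ (maxn (Nf (ee O i)) i.+1) (leq_maxl _ _)).
  exact: (C1 _ (Ordinal Hi)).
exists C, (op O), (fun phi => exists c, h c = phi), h.
split.
  split.
    rewrite /is_subalg; cbv zeta; split; [|split].
    - move=> s xs Hxs.
      pose cs j := proj1_sig (constructive_indefinite_description _ (Hxs j)).
      exists (opn O s cs); rewrite hop; congr (opn _ s).
      apply: functional_extensionality => j.
      exact: (proj2_sig (constructive_indefinite_description _ (Hxs j))).
    - move=> n phi psi [c Hc] Hpsi.
      pose cs j := proj1_sig (constructive_indefinite_description _ (Hpsi j)).
      exists (qqn O n c cs); rewrite hqq Hc; congr (qqn _ n phi).
      apply: functional_extensionality => j.
      exact: (proj2_sig (constructive_indefinite_description _ (Hpsi j))).
    - by move=> i; exists (ee O i); exact: hee.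
  move=> phi [c <-]; exists (Nf c), (fun v => qqn O (Nf c) c v); reflexivity.
rewrite /iso_onto; cbv zeta.
split; first exact: hinj.
split; first by move=> phi; split.
split; first exact: hop.
split; first exact: hqq.
exact: hee.
Qed.

Lemma block_fica sig (ar : sig -> nat) C (O : cloneOps ar C) :
  is_clone_alg O -> iso_to_block O -> FiCA O.
Proof.
move=> H [A [opA [S [h [[Hsub Hblk] [hinj [hS [hop [hqq hee]]]]]]]]].
split => // a.
have [n [f Hf]] := Hblk (h a) ((hS _).2 (ex_intro _ a erefl)).
exists n => m Hnm; apply: hinj.
rewrite /independent hqq Hf /=.
apply: functional_extensionality => t; rewrite /top_ext; congr f.
apply: functional_extensionality => i; rewrite /upd.
case: insubP => [j _ Ej | /negP []].
  have Hj : val j < m by rewrite Ej; exact: leq_trans (ltn_ord i) Hnm.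
  by rewrite Hj hee /= Ej.
apply: leq_trans (ltn_ord i) _; exact: leq_trans Hnm (leqnSn m).
Qed.

Theorem theorem7p7 (sig : Type) (ar : sig -> nat) (C : Type)
  (O : cloneOps ar C) :
  is_clone_alg O -> (FiCA O <-> iso_to_block O).
Proof.
move=> H; split; [exact: fica_block | exact: block_fica].
Qed.
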